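(* Let $G$ be a simple cycle-extendable graph, let $x_0$ be a vertex of degree two in $G$, and let $J'=G/x_0$. Then either $J'$ is simple or $J'$ has exactly two multiple edges (that is, exactly one pair of parallel edges and no other parallel edges). Furthermore, if $G$ is irreducible, then the underlying simple graph of $J'$ is also irreducible.
   Context: A graph is matching covered if it is connected, has at least two vertices, and every edge lies in some perfect matching; it is cycle-extendable if moreover for every even cycle $C$ the graph $G-V(C)$ has a perfect matching. $G/x_0$ is the graph obtained from $G$ by contracting both edges incident with the degree-two vertex $x_0$ into a single vertex (parallel edges may arise). A graph is irreducible if it is simple and its vertices of degree two form a stable set. *)

(* Defs.v *)
From mathcomp Require Import all_boot.
Set Implicit Arguments. Unset Strict Implicit. Unset Printing Implicit Defensive.

Section Graphs.
Variable T : finType.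

Definition simple_graph (e : rel T) : Prop :=
  symmetric e /\ irreflexive e.

Definition edges (e : rel T) : {set {set T}} :=
  [set E | [exists a, exists b, e a b && (E == [set a; b])]].

Definition deg_on (S : {set T}) (e : rel T) (x : T) : nat :=
  #|[set y in S | e x y]|.

Definition deg (e : rel T) (x : T) : nat := deg_on setT e x.

Definition perfect_matching_on (e : rel T) (S : {set T}) (M : {set {set T}}) : Prop :=
  M \subset edges e /\
  (forall E, E \in M -> E \subset S) /\
  (forall x, x \in S -> #|[set E in M | x \in E]| = 1).

Definition has_perfect_matching_on (e : rel T) (S : {set T}) : Prop :=
  exists M, perfect_matching_on e S M.

Definition connected_graph (e : rel T) : Prop := forall x y, connect e x y.

Definition matching_covered (e : rel T) : Prop :=
  connected_graph e /\ 2 <= #|T| /\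
  (forall a b, e a b -> exists M, perfect_matching_on e setT M /\ [set a; b] \in M).

Definition even_cycle (e : rel T) (s : seq T) : Prop :=
  [/\ uniq s, 3 <= size s, ~~ odd (size s) & cycle e s].

Definition cycle_extendable (e : rel T) : Prop :=
  matching_covered e /\
  (forall s, even_cycle e s -> has_perfect_matching_on e (~: [set x in s])).

Definition irreducible_on (S : {set T}) (e : rel T) : Prop :=
  (forall x y, x \in S -> y \in S -> e x y = e y x) /\
  (forall x, x \in S -> ~~ e x x) /\
  (forall x y, x \in S -> y \in S -> deg_on S e x = 2 -> deg_on S e y = 2 ->
     ~~ e x y).

Definition irreducible (e : rel T) : Prop := irreducible_on setT e.

(* ---- The multigraph G/x0 ----
   The neighbours of x0 and x0 itself are merged into a single vertex,
   represented by x0.  [bc_map e x0] sends each neighbour of x0 to x0. *)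
Definition bc_map (e : rel T) (x0 : T) (a : T) : T :=
  if e x0 a then x0 else a.

Definition bc_vertices (e : rel T) (x0 : T) : {set T} :=
  [set a | ~~ e x0 a].

(* multiplicity of the edge {p,q} in G/x0 (for p = q: number of loops at p):
   edges of G not incident with x0 whose image is {p,q} *)
Definition bc_mult (e : rel T) (x0 : T) (p q : T) : nat :=
  #|[set E in edges e | (x0 \notin E) && (bc_map e x0 @: E == [set p; q])]|.

Definition bc_simple (e : rel T) (x0 : T) : Prop :=
  (forall p, p \in bc_vertices e x0 -> bc_mult e x0 p p = 0) /\
  (forall p q, p \in bc_vertices e x0 -> q \in bc_vertices e x0 -> p != q ->
     bc_mult e x0 p q <= 1).

Definition bc_exactly_two_multiple_edges (e : rel T) (x0 : T) : Prop :=
  exists p q, [/\ p \in bc_vertices e x0, q \in bc_vertices e x0, p != q,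
    bc_mult e x0 p q = 2 &
    forall p' q', p' \in bc_vertices e x0 -> q' \in bc_vertices e x0 -> p' != q' ->
      [set p'; q'] != [set p; q] -> bc_mult e x0 p' q' <= 1].

Definition bc_underlying (e : rel T) (x0 : T) : rel T :=
  fun p q => [&& p \in bc_vertices e x0, q \in bc_vertices e x0, p != q &
                 0 < bc_mult e x0 p q].

End Graphs.

(* Main.v *)
Require Import Defs.
From mathcomp Require Import all_boot zify.
Set Implicit Arguments. Unset Strict Implicit. Unset Printing Implicit Defensive.

Lemma card_D1D1 (T : finType) (A : {set T}) (x y : T) : 2 < #|A| -> 0 < #|A :\ x :\ y|.
Proof.
move=> H; have h1 := cardsD1 x A; have h2 := cardsD1 y (A :\ x).
have := leq_b1 (x \in A); have := leq_b1 (y \in A :\ x); lia.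
Qed.

Fixpoint altw (T : Type) (f g : T -> T) (b : T) (n : nat) : T :=
  match n with 0 => b | n'.+1 => (if odd n' then g else f) (altw f g b n') end.

Section Alt.
Variable T : finType.
Variables f g : T -> T.
Hypothesis fK : involutive f.
Hypothesis gK : involutive g.
Hypothesis fne : forall x, f x != x.
Hypothesis gne : forall x, g x != x.
Variable b : T.

Definition F n := if odd n then g else f.
Lemma FK n : involutive (F n). Proof. by rewrite /F; case: odd. Qed.
Lemma Fne n x : F n x != x. Proof. by rewrite /F; case: odd. Qed.
Notation w := (altw f g b).
Lemma altwS n : w n.+1 = F n (w n). Proof. by []. Qed.

Lemma altw_even i : w (i.*2) = iter i (g \o f) b.
Proof.
elim: i => [|i IH] //; rewrite doubleS altwS altwS /F /= odd_double /= IH. by [].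
Qed.

Lemma altw_odd i : w (i.*2.+1) = f (w i.*2).
Proof. by rewrite altwS /F odd_double. Qed.

Lemma cross n p : w p != w (p + n.*2.+1).
Proof.
elim: n p => [|n IH] p.
  by rewrite addn1 altwS eq_sym Fne.
apply/eqP => E; have := IH p.+1; rewrite altwS E.
have -> : p + (n.+1).*2.+1 = (p + n.*2.+2).+1 by rewrite doubleS !addnS.
rewrite altwS.
have -> : F (p + n.*2.+2) = F p by rewrite /F !addnS /= negbK oddD odd_double addbF.
by rewrite FK addSn addnS eqxx.
Qed.

End Alt.

Section Basics.
Variable T : finType.
Variable e : rel T.
Hypothesis esym : symmetric e.
Hypothesis eirr : irreflexive e.

Lemma adj_neq x y : e x y -> x != y.
Proof. by move=> H; apply/eqP=> E; rewrite E eirr in H. Qed.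

Lemma edgesP E : reflect (exists a b, e a b /\ E = [set a; b]) (E \in edges e).
Proof.
rewrite inE; apply: (iffP existsP) => [[a /existsP [b /andP [H /eqP ->]]]|[a [b [H ->]]]].
  by exists a, b.
by exists a; apply/existsP; exists b; rewrite H eqxx.
Qed.

Lemma edge_ne x v : [set x; v] \in edges e -> x != v.
Proof.
case/edgesP=> a [b [H E]]; apply/eqP=> xv; subst v.
have : #|[set x; x]| = #|[set a; b]| by rewrite E.
by rewrite setUid cards1 cards2 (adj_neq H).
Qed.

Definition pm M := perfect_matching_on e setT M.

Lemma pm_edge M x : pm M -> exists v, [set x; v] \in M /\ e x v.
Proof.
case=> sub [_ one]; have := one x (in_setT x); move/eqP/cards1P=> [E0 HE].
have : E0 \in [set E in M | x \in E] by rewrite HE set11.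
rewrite inE => /andP [E0M xE0].
have := subsetP sub _ E0M; case/edgesP=> a [b [H Eab]]; subst E0.
move: xE0; rewrite !inE => /orP [/eqP ->|/eqP ->].
  by exists b.
by exists a; rewrite setUC E0M esym.
Qed.

Lemma pm_uniq M x v v' : pm M -> [set x; v] \in M -> [set x; v'] \in M -> v = v'.
Proof.
case=> sub [_ one] H1 H2.
have n1 := edge_ne (subsetP sub _ H1); have n2 := edge_ne (subsetP sub _ H2).
have := one x (in_setT x) => /eqP; rewrite eqn_leq => /andP [/card_le1_eqP Hc _].
have E : [set x; v] = [set x; v'] by apply: Hc; rewrite inE ?H1 ?H2 set21.
have : v \in [set x; v'] by rewrite -E set22.
rewrite !inE => /orP [/eqP vx|/eqP //]; by rewrite vx eqxx in n1.
Qed.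

Definition partner (M : {set {set T}}) x := odflt x [pick v | [set x; v] \in M].

Lemma partnerP M x : pm M -> [set x; partner M x] \in M /\ e x (partner M x).
Proof.
move=> H; rewrite /partner; case: pickP => [v Hv|none] /=.
  split=> //; case: H => sub _; case/edgesP: (subsetP sub _ Hv) => a [b [Hab E]].
  have xv := edge_ne (subsetP sub _ Hv).
  have : x \in [set a; b] by rewrite -E set21.
  have : v \in [set a; b] by rewrite -E set22.
  rewrite !inE => /orP [/eqP va|/eqP vb] /orP [/eqP xa|/eqP xb]; subst;
  try (move: xv; rewrite eqxx; done); try (rewrite esym; done); done.
by case: (pm_edge x H) => v [Hv _]; rewrite none in Hv.
Qed.

Lemma partner_uniq M x v : pm M -> [set x; v] \in M -> partner M x = v.
Proof. by move=> H Hv; apply: (pm_uniq H (partnerP x H).1 Hv). Qed.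

Lemma partnerK M : pm M -> involutive (partner M).
Proof.
move=> H x; apply: partner_uniq => //; rewrite setUC; exact: (partnerP x H).1.
Qed.

Lemma partner_neq M x : pm M -> partner M x != x.
Proof. by move=> H; rewrite eq_sym; apply: adj_neq; exact: (partnerP x H).2. Qed.

Lemma iso_contra s x : cycle_extendable e -> even_cycle e s -> x \notin s ->
  (forall v, e x v -> v \in s) -> False.
Proof.
case=> _ ce ec xs nb; case: (ce s ec) => M [sub [inS one]].
have xS : x \in ~: [set y in s] by rewrite !inE xs.
have := one x xS => /eqP/cards1P [E0 HE].
have : E0 \in [set E in M | x \in E] by rewrite HE set11.
rewrite inE => /andP [E0M xE0].
have sS := inS _ E0M.
case/edgesP: (subsetP sub _ E0M) => a [b [H Eab]]; subst E0.
move: xE0; rewrite !inE => /orP [/eqP xa|/eqP xb]; subst x.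
  have := nb _ H => bs.
  by have := subsetP sS b (set22 _ _); rewrite !inE bs.
have := nb a; rewrite esym => /(_ H) => as_.
by have := subsetP sS a (set21 _ _); rewrite !inE as_.
Qed.


Lemma path_iota (W : nat -> T) x y m n : e x (W m) ->
  (forall i, m <= i < m + n -> e (W i) (W i.+1)) -> e (W (m + n)) y ->
  path e x (rcons (map W (iota m n.+1)) y).
Proof.
elim: n m x => [|n IH] m x H1 H2 H3.
  by rewrite /= H1 /= -(addn0 m) H3.
rewrite /= H1 /=.
have := IH m.+1 (W m) (H2 m _) _ _; rewrite /=; apply.
- lia.
- by move=> i Hi; apply: H2; lia.
- by rewrite addSnnS.
Qed.

Lemma core x0 b c d M0 M5 : cycle_extendable e ->
  (forall v, e x0 v = (v == b) || (v == c)) -> b != c -> e d b -> e d c ->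
  d != x0 -> pm M0 -> pm M5 -> [set x0; b] \in M0 -> [set x0; c] \in M5 ->
  partner M0 d = partner M5 d -> False.
Proof.
move=> ce Nx0 bc db dc dx0 p0 p5 x0b x0c pd.
set f := partner M5; set g := partner M0.
have fK : involutive f := partnerK p5.
have gK : involutive g := partnerK p0.
have fne x : f x != x := partner_neq x p5.
have gne x : g x != x := partner_neq x p0.
have fe x : e x (f x) := (partnerP x p5).2.
have ge x : e x (g x) := (partnerP x p0).2.
have fc : f c = x0 by apply: partner_uniq; rewrite // setUC.
have gx0 : g x0 = b by apply: partner_uniq.
have hinj : injective (g \o f) := inj_comp (can_inj gK) (can_inj fK).
have hc : (g \o f) c = b by rewrite /= fc gx0.
have conn : fconnect (g \o f) b c by rewrite fconnect_sym // -hc fconnect1.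
have exn : exists n, iter n (g \o f) b == c.
  by exists (findex (g \o f) b c); rewrite iter_findex.
case: (ex_minnP exn) => k /eqP hk kmin.
set W := altw f g b.
have Wev i : W i.*2 = iter i (g \o f) b := altw_even f g b i.
have Wod i : W i.*2.+1 = f (W i.*2) := altw_odd f g b i.
have k0 : 0 < k.
  case: k hk kmin => // hk _; by rewrite /= in hk; rewrite hk eqxx in bc.
have itd i j : i < j <= k -> iter i (g \o f) b != iter j (g \o f) b.
  move=> Hij; apply/eqP => E.
  have : iter ((k - j) + i) (g \o f) b == c.
    by rewrite iterD E -iterD subnK ?hk //; lia.
  by move/kmin; lia.
have Winj p q : p < q <= k.*2.+1 -> W p != W q.
  move=> Hpq.
  have [m qm] : exists m, q = p + m.+1 by exists (q - p).-1; lia.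
  subst q.
  case: (boolP (odd m.+1)) => om.
    have -> : p + m.+1 = p + ((m.+1)./2).*2.+1.
      by have := odd_double_half m.+1; rewrite om; lia.
    exact: cross.
  have ep := odd_double_half p; have eq := odd_double_half (p + m.+1).
  have opq : odd (p + m.+1) = odd p by rewrite oddD (negbTE om) addbF.
  rewrite opq in eq.
  move: (p./2) ((p + m.+1)./2) ep eq => i j ep eq.
  move: ep eq Hpq; case: (odd p) => /= ep eq Hpq.
    rewrite -eq -{1}ep !add1n !Wod (inj_eq (can_inj fK)) !Wev; apply: itd; lia.
  rewrite -eq -{1}ep !add0n !Wev; apply: itd; lia.
have Wk : W k.*2 = c by rewrite Wev hk.
have Wk1 : W k.*2.+1 = x0 by rewrite Wod Wk fc.
set L := mkseq W k.*2.+1.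
have inL i : i < k.*2.+1 -> W i \in L.
  by move=> Hi; apply/mapP; exists i; rewrite ?mem_iota.
have inL' v : v \in L -> exists2 i, i < k.*2.+1 & v = W i.
  by case/mapP=> i; rewrite mem_iota => Hi ->; exists i => //; lia.
have x0L : x0 \notin L.
  apply/negP => /inL' [i Hi E].
  have : W i != W k.*2.+1 by apply: Winj; lia.
  by rewrite -E Wk1 eqxx.
have Fd n : F f g n d = f d by rewrite /F; case: odd; rewrite // -pd.
have dL : d \notin L.
  apply/negP => /inL' [i Hi E].
  case: i Hi E => [|i] Hi E.
    by move: (adj_neq db); rewrite E eqxx.
  case: (ltngtP i.+1 k.*2) => Hk.
  - have E1 : W i.+2 = f d by rewrite /W altwS -/W -E Fd.
    have E2 : W i = f d by rewrite -(Fd i) E /W altwS (FK fK gK).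
    have : W i != W i.+2 by apply: Winj; lia.
    by rewrite E1 E2 eqxx.
  - lia.
  - by move: (adj_neq dc); rewrite E Hk Wk eqxx.
apply: (@iso_contra (d :: L) x0 ce).
- split.
  + rewrite cons_uniq dL /L /mkseq map_inj_in_uniq ?iota_uniq // => i j.
    rewrite !mem_iota => Hi Hj E; apply/eqP.
    case: (ltngtP i j) => // H; exfalso.
      have : W i != W j by apply: Winj; lia.
      by rewrite E eqxx.
    have : W j != W i by apply: Winj; lia.
    by rewrite E eqxx.
  + rewrite /= size_map size_iota; lia.
  + by rewrite /= size_map size_iota negbK odd_double.
  + rewrite /cycle /L /mkseq; apply: path_iota => //.
      by move=> i _; rewrite /W altwS /F; case: odd.
    by rewrite add0n Wk esym.
- by rewrite in_cons negb_or x0L andbT eq_sym.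
- move=> v; rewrite Nx0 inE => /orP [/eqP ->|/eqP ->]; apply/orP; right.
    exact: (inL 0).
  by rewrite -Wk; apply: inL.
Qed.

Lemma pair_eq (u v p q : T) : [set u; v] = [set p; q] ->
  (u = p /\ v = q) \/ (u = q /\ v = p).
Proof.
move=> E.
have : u \in [set p; q] by rewrite -E set21.
have : v \in [set p; q] by rewrite -E set22.
have : p \in [set u; v] by rewrite E set21.
have : q \in [set u; v] by rewrite E set22.
rewrite !inE => /orP [/eqP qu|/eqP qv] /orP [/eqP pu|/eqP pv]
  /orP [/eqP vp|/eqP vq] /orP [/eqP up|/eqP uq]; subst; tauto.
Qed.

Section BC.
Variable x0 : T.
Notation bm := (bc_map e x0).
Notation Bset p q :=
  [set E in edges e | (x0 \notin E) && (bc_map e x0 @: E == [set p; q])].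

Lemma bmN v : ~~ e x0 v -> bm v = v.
Proof. by rewrite /bc_map => /negbTE ->. Qed.
Lemma bmY v : e x0 v -> bm v = x0.
Proof. by rewrite /bc_map => ->. Qed.

Lemma BsetP p q E : E \in Bset p q -> exists a a',
  [/\ e a a', E = [set a; a'], a != x0, a' != x0 & [set bm a; bm a'] = [set p; q]].
Proof.
rewrite inE => /andP [/edgesP [a [a' [H ->]]] /andP [xE /eqP im]].
exists a, a'; split => //.
- by apply: contraNneq xE => <-; rewrite set21.
- by apply: contraNneq xE => <-; rewrite set22.
- by rewrite -im imsetU1 imset_set1.
Qed.

Lemma BsetI a a' : e a a' -> a != x0 -> a' != x0 ->
  [set a; a'] \in Bset (bm a) (bm a').
Proof.
move=> H ax ax'; rewrite inE; apply/andP; split.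
  by apply/edgesP; exists a, a'.
rewrite imsetU1 imset_set1 eqxx andbT !inE negb_or.
by rewrite eq_sym ax eq_sym ax'.
Qed.

Lemma mult_sym p q : bc_mult e x0 p q = bc_mult e x0 q p.
Proof. by rewrite /bc_mult setUC. Qed.

End BC.

Section Main.
Variables x0 b c : T.
Hypothesis ce : cycle_extendable e.
Hypothesis Nx0 : forall v, e x0 v = (v == b) || (v == c).
Hypothesis bc : b != c.
Notation bm := (bc_map e x0).
Notation V := (bc_vertices e x0).
Notation mult := (bc_mult e x0).
Notation Bset x0 p q :=
  [set E in edges e | (x0 \notin E) && (bc_map e x0 @: E == [set p; q])].

Let mc : forall a a', e a a' -> exists M, pm M /\ [set a; a'] \in M.
Proof. by case: ce => [[_ [_ H]] _]. Qed.

Let x0b : e x0 b. Proof. by rewrite Nx0 eqxx. Qed.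
Let x0c : e x0 c. Proof. by rewrite Nx0 eqxx orbT. Qed.
Let nx0b : x0 != b. Proof. exact: adj_neq x0b. Qed.
Let nx0c : x0 != c. Proof. exact: adj_neq x0c. Qed.

Lemma inV p : (p \in V) = ~~ e x0 p.
Proof. by rewrite inE. Qed.
Lemma x0V : x0 \in V.
Proof. by rewrite inV eirr. Qed.

Lemma nbc : ~~ e b c.
Proof.
apply/negP => H; have [M [pmM bcM]] := mc H.
have [v [xv]] := pm_edge x0 pmM; rewrite Nx0 => /orP [/eqP E|/eqP E]; subst v.
  have := pm_uniq pmM (_ : [set b; x0] \in M) bcM.
  by rewrite setUC => /(_ xv) E; move: nx0c; rewrite E eqxx.
have := pm_uniq pmM (_ : [set c; x0] \in M) (_ : [set c; b] \in M).
rewrite setUC => /(_ xv); rewrite setUC => /(_ bcM) E.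
by move: nx0b; rewrite E eqxx.
Qed.

Lemma nbr_nonadj u u' : e x0 u -> e x0 u' -> ~~ e u u'.
Proof.
rewrite !Nx0 => /orP [/eqP ->|/eqP ->] /orP [/eqP ->|/eqP ->]; rewrite ?eirr //.
  exact: nbc.
by rewrite esym nbc.
Qed.

Lemma comm q1 q2 : q1 != x0 -> q2 != x0 -> e b q1 -> e c q1 -> e b q2 -> e c q2 ->
  q1 = q2.
Proof.
move=> n1 n2 b1 c1 b2 c2; apply/eqP; apply: contraT => ne; exfalso.
apply: (@iso_contra [:: b; q1; c; q2] x0 ce).
- split => //=.
  + rewrite !inE !negb_or (adj_neq b1) (adj_neq b2) bc ne /=.
    by rewrite eq_sym (adj_neq c1) (adj_neq c2).
  + by rewrite b1 (esym q1) c1 c2 esym b2.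
- by rewrite !inE !negb_or nx0b nx0c !(eq_sym x0) n1 n2.
- by move=> v; rewrite Nx0 !inE => /orP [->|->]; rewrite ?orbT.
Qed.

Lemma loops p : p \in V -> mult p p = 0.
Proof.
move=> pV; apply/eqP; rewrite cards_eq0; apply/eqP/setP => E.
rewrite in_set0; apply/negP => /BsetP [a [a' [H _ ax ax' im]]].
rewrite setUid in im.
have ha : bm a = p by apply/set1P; rewrite -im set21.
have ha' : bm a' = p by apply/set1P; rewrite -im set22.
move: ha ha'; rewrite /bc_map.
case: (boolP (e x0 a)) => xa; case: (boolP (e x0 a')) => xa' <- ee.
- by have := nbr_nonadj xa xa'; rewrite H.
- by rewrite ee eqxx in ax'.
- by rewrite -ee eqxx in ax.
- by rewrite ee eirr in H.
Qed.

Lemma mult_nox0 p q : p \in V -> q \in V -> p != x0 -> q != x0 -> mult p q <= 1.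
Proof.
move=> pV qV px qx; apply/card_le1_eqP => E1 E2.
suff H E : E \in Bset x0 p q -> E = [set p; q] by move=> /H -> /H ->.
case/BsetP => a [a' [H -> ax ax' im]].
have : bm a \in [set p; q] by rewrite -im set21.
have : bm a' \in [set p; q] by rewrite -im set22.
rewrite /bc_map; case: (boolP (e x0 a)) => xa.
  by rewrite !inE => _ /orP [/eqP ee|/eqP ee]; [rewrite ee eqxx in px|rewrite ee eqxx in qx].
case: (boolP (e x0 a')) => xa'.
  by rewrite !inE => /orP [/eqP ee|/eqP ee]; [rewrite ee eqxx in px|rewrite ee eqxx in qx].
by move: im; rewrite (bmN xa) (bmN xa').
Qed.

Lemma Bx0 q E : q != x0 -> E \in Bset x0 x0 q ->
  (E = [set b; q] /\ e b q) \/ (E = [set c; q] /\ e c q).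
Proof.
move=> qx /BsetP [a [a' [H -> ax ax' im]]].
have key u u' : e u u' -> u != x0 -> bm u = x0 -> bm u' = q ->
    ([set u; u'] = [set b; q] /\ e b q) \/ ([set u; u'] = [set c; q] /\ e c q).
  move=> Huu ux; rewrite /bc_map; case: (boolP (e x0 u)) => xu; last first.
    by move=> ee; rewrite ee eqxx in ux.
  move=> _; case: (boolP (e x0 u')) => xu'.
    by move=> ee; rewrite ee eqxx in qx.
  move=> <-; move: xu; rewrite Nx0 => /orP [/eqP ee|/eqP ee]; subst u; tauto.
case: (pair_eq im) => [[h1 h2]|[h1 h2]].
  exact: key.
rewrite setUC; apply: key => //; by rewrite esym.
Qed.

Lemma mult_x0_le1 q : q != x0 -> ~~ (e b q && e c q) -> mult x0 q <= 1.
Proof.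
move=> qx nc; apply/card_le1_eqP => E1 E2 /(Bx0 qx) H1 /(Bx0 qx) H2.
case: H1 H2 => [[-> h1]|[-> h1]] [[-> h2]|[-> h2]] //.
  by rewrite h1 h2 in nc.
by rewrite h1 h2 in nc.
Qed.

Lemma mult_x0_2 q : q != x0 -> e b q -> e c q -> mult x0 q = 2.
Proof.
move=> qx bq cq.
have qV : ~~ e x0 q.
  by rewrite Nx0 negb_or eq_sym (adj_neq bq) eq_sym (adj_neq cq).
have nbq : [set b; q] != [set c; q].
  apply/eqP => E; have : b \in [set c; q] by rewrite -E set21.
  by rewrite !inE (negbTE (adj_neq bq)) (negbTE bc).
have c2 : #|[set [set b; q]; [set c; q]]| = 2 by rewrite cards2 nbq.
have bx : b != x0 by rewrite eq_sym.
have cx : c != x0 by rewrite eq_sym.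
apply/eqP; rewrite eqn_leq; apply/andP; split.
  rewrite -c2; apply: subset_leq_card.
  apply/subsetP => E /(Bx0 qx) [[-> _]|[-> _]]; by rewrite !inE eqxx ?orbT.
rewrite -c2; apply: subset_leq_card.
apply/subsetP => E; rewrite in_set2 => /orP [/eqP ->|/eqP ->].
  by have := BsetI (x0:=x0) bq bx qx; rewrite (bmY x0b) (bmN qV).
by have := BsetI (x0:=x0) cq cx qx; rewrite (bmY x0c) (bmN qV).
Qed.

Definition N u := [set y in [set: T] | e u y].
Notation J := (bc_underlying e x0).
Notation NJ x := [set y in V | J x y].

Lemma inN u v : (v \in N u) = e u v.
Proof. by rewrite !inE. Qed.

Lemma degx0 : deg e x0 = 2.
Proof.
rewrite /deg /deg_on.
have -> : [set y in setT | e x0 y] = [set b; c] by apply/setP => v; rewrite !inE Nx0.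
by rewrite cards2 bc.
Qed.

Lemma degge u u' : irreducible e -> e x0 u -> e x0 u' -> u != u' -> 2 < #|N u|.
Proof.
move=> [_ [_ irr3]] xu xu' uu'.
have [M [pmM uM]] := mc xu'.
have [P1 P2] := partnerP u pmM.
have vx : partner M u != x0.
  apply/eqP => E; rewrite E setUC in P1.
  by have := pm_uniq pmM P1 uM => E'; rewrite E' eqxx in uu'.
have ge2 : 2 <= #|N u|.
  have <- : #|[set x0; partner M u]| = 2 by rewrite cards2 eq_sym vx.
  by apply: subset_leq_card; apply/subsetP => v; rewrite !inE => /orP [/eqP ->|/eqP ->];
    rewrite ?P2 // esym.
have ne2 : #|N u| != 2.
  apply/eqP => H; have := irr3 x0 u (in_setT _) (in_setT _) degx0 H.
  by rewrite xu.
by rewrite ltn_neqAle eq_sym ne2.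
Qed.

Lemma NJ_x0_sub u : e x0 u -> N u :\ x0 \subset NJ x0.
Proof.
move=> xu; apply/subsetP => v; rewrite in_setD1 inN => /andP [vx uv].
have xv : ~~ e x0 v by apply/negP => xv; have := nbr_nonadj xu xv; rewrite uv.
rewrite inE inV xv /bc_underlying x0V inV xv eq_sym vx /=.
apply/card_gt0P; exists [set u; v].
have ux : u != x0 by rewrite eq_sym adj_neq.
by have := BsetI (x0:=x0) uv ux vx; rewrite (bmY xu) (bmN xv).
Qed.

Lemma noJx0 : irreducible e -> #|NJ x0| != 2.
Proof.
move=> irr; apply/eqP => H.
have bigN u u' : e x0 u -> e x0 u' -> u != u' -> N u :\ x0 = NJ x0.
  move=> xu xu' uu'; have := degge irr xu xu' uu'.
  rewrite (cardsD1 x0 (N u)) inN esym xu add1n ltnS => ge.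
  apply/eqP; rewrite eqEcard NJ_x0_sub // H ge //.
have Eb := bigN _ _ x0b x0c bc.
have Ec := bigN _ _ x0c x0b (_ : c != b).
move/eqP/cards2P: H => [u1 [u2 [ne E]]].
have m1 : u1 \in NJ x0 by rewrite E set21.
have m2 : u2 \in NJ x0 by rewrite E set22.
move: (m1) (m2); rewrite -{1}Eb -{1}Eb !inE => /andP [n1 b1] /andP [n2 b2].
move: m1 m2; rewrite -Ec; last by rewrite eq_sym.
rewrite !inE => /andP [_ c1] /andP [_ c2].
by have := comm n1 n2 b1 c1 b2 c2 => E'; rewrite E' eqxx in ne.
Qed.

Lemma NJ_img x : x \in V -> x != x0 -> NJ x = bm @: N x.
Proof.
rewrite inV => xV xx; apply/setP => v; rewrite inE /bc_underlying (inV x) xV /= andbA andbb.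
apply/idP/idP.
  case/and3P => vV xv /card_gt0P [E /BsetP [a [a' [H _ ax ax' im]]]].
  have bx u : bm u = x -> u = x.
    by rewrite /bc_map; case: (e x0 u) => // E'; rewrite E' eqxx in xx.
  case: (pair_eq im) => [[h1 h2]|[h1 h2]].
    by rewrite (bx _ h1) in H; apply/imsetP; exists a'; rewrite ?inN.
  by rewrite (bx _ h2) in H; apply/imsetP; exists a; rewrite ?inN // esym.
case/imsetP => u; rewrite inN => xu ->.
have ux : u != x0 by apply: contraNneq xV => <-; rewrite esym.
case: (boolP (e x0 u)) => xu'.
  rewrite (bmY xu') x0V xx /=.
  apply/card_gt0P; exists [set x; u].
  by have := BsetI (x0:=x0) xu xx ux; rewrite (bmN xV) (bmY xu').
rewrite (bmN xu') inV xu' (adj_neq xu) /=.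
apply/card_gt0P; exists [set x; u].
by have := BsetI (x0:=x0) xu xx ux; rewrite (bmN xV) (bmN xu').
Qed.

Lemma noncommon x : x \in V -> x != x0 -> ~~ (e b x && e c x) -> #|N x| = #|NJ x|.
Proof.
move=> xV xx nc; rewrite NJ_img // card_in_imset // => u u'; rewrite !inN => xu xu'.
rewrite /bc_map; case: (boolP (e x0 u)) => h; case: (boolP (e x0 u')) => h' //.
- move=> _; move: h h'; rewrite !Nx0 => /orP [/eqP E|/eqP E] /orP [/eqP E'|/eqP E']; subst => //.
  + by rewrite (esym b x) (esym c x) xu xu' in nc.
  + by rewrite (esym b x) (esym c x) xu xu' in nc.
- by move=> E; rewrite -E in xu'; move: xV; rewrite inV esym xu'.
- by move=> E; rewrite E in xu; move: xV; rewrite inV esym xu.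
Qed.

Lemma oth M u t x : pm M -> [set u; t] \in M -> t != x -> partner M x != u.
Proof.
move=> pmM H tx; apply/eqP => E; have P := (partnerP x pmM).1.
rewrite E setUC in P; have := pm_uniq pmM P H => E'.
by rewrite E' eqxx in tx.
Qed.

Lemma x0_in M u u' t : pm M -> e x0 u -> e x0 u' -> u != u' -> [set u; t] \in M ->
  t != x0 -> [set x0; u'] \in M.
Proof.
move=> pmM xu xu' uu' H tx.
have [P1 P2] := partnerP x0 pmM.
have nu : partner M x0 != u by apply: oth pmM H tx.
suff E : partner M x0 = u' by rewrite -E.
move: (partner M x0) P2 nu => v P2 nu.
rewrite Nx0 in P2; rewrite Nx0 in xu; rewrite Nx0 in xu'.
case/orP: P2 => /eqP Ev; case/orP: xu => /eqP Eu; case/orP: xu' => /eqP Eu'; subst v u u';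
  by move: nu uu'; rewrite ?eqxx.
Qed.

Lemma common_contra x : irreducible e -> x \in V -> x != x0 -> e b x -> e c x ->
  #|NJ x| != 2.
Proof.
move=> irr xV xx bx cx; apply/eqP => H.
have xVn : ~~ e x0 x by rewrite -inV.
have cb : c != b by rewrite eq_sym.
have pickS u u' : e x0 u -> e x0 u' -> u != u' -> exists s, [/\ e u s, s != x0 & s != x].
  move=> xu xu' uu'; have := degge irr xu xu' uu'.
  move/(card_D1D1 x0 x); case/card_gt0P => s; rewrite !in_setD1 inN => /and3P [sx sx0 us].
  by exists s.
have [s [bs sx0 sx]] := pickS b c x0b x0c bc.
have [s' [cs s'x0 s'x]] := pickS c b x0c x0b cb.
have [M5 [p5 bsM]] := mc bs.
have [M0 [p0 csM]] := mc cs.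
have x0c5 : [set x0; c] \in M5 := x0_in p5 x0b x0c bc bsM sx0.
have x0b0 : [set x0; b] \in M0 := x0_in p0 x0c x0b cb csM s'x0.
have inNJ M t t' : pm M -> [set b; t] \in M -> [set c; t'] \in M -> t != x -> t' != x ->
    partner M x \in NJ x /\ partner M x != x0.
  move=> pmM Hb Hc tx t'x.
  have n1 := oth pmM Hb tx; have n2 := oth pmM Hc t'x.
  have [_ P2] := partnerP x pmM.
  have nx : ~~ e x0 (partner M x) by rewrite Nx0 negb_or n1 n2.
  split; last by apply: contraNneq xVn => <-; rewrite esym.
  rewrite NJ_img //; apply/imsetP; exists (partner M x); rewrite ?inN //.
  by rewrite (bmN nx).
have x0x : x0 != x by rewrite eq_sym.
have b0 : [set b; x0] \in M0 by rewrite setUC.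
have c5 : [set c; x0] \in M5 by rewrite setUC.
have [m0 n0] := inNJ M0 x0 s' p0 b0 csM x0x s'x.
have [m5 n5] := inNJ M5 s x0 p5 bsM c5 sx x0x.
have mx0 : x0 \in NJ x.
  by rewrite NJ_img //; apply/imsetP; exists b; rewrite ?inN ?(bmY x0b) // esym.
move/eqP/cards2P: H => [u1 [u2 [ne E]]].
rewrite E !inE in m0 m5 mx0.
have xb' : e x b by rewrite esym.
have xc' : e x c by rewrite esym.
apply: (core ce Nx0 bc xb' xc' xx p0 p5 x0b0 x0c5).
move: (partner M0 x) (partner M5 x) m0 m5 n0 n5 => v0 v5 m0 m5 n0 n5.
case/orP: m0 => /eqP E0; case/orP: m5 => /eqP E5; case/orP: mx0 => /eqP Ex;
  rewrite E0 E5 in n0 n5 *; rewrite -Ex in n0 n5 ne; by move: n0 n5 ne; rewrite ?eqxx.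
Qed.

Lemma main_part : (bc_simple e x0 \/ bc_exactly_two_multiple_edges e x0) /\
  (irreducible e -> irreducible_on V J).
Proof.
split.
  case: (boolP [exists q, (q != x0) && e b q && e c q]).
    case/existsP => q /andP [/andP [qx bq] cq]; right; exists x0, q.
    have qV : q \in V.
      by rewrite inV Nx0 negb_or eq_sym (adj_neq bq) eq_sym (adj_neq cq).
    split => //; first exact: x0V.
    - by rewrite eq_sym.
    - exact: mult_x0_2.
    move=> p' q' p'V q'V ne neq.
    case: (eqVneq p' x0) => [Ep|p'x].
      rewrite Ep in ne neq *; apply: mult_x0_le1; first by rewrite eq_sym.
      apply/negP => /andP [bq' cq'].
      have q'x : q' != x0 by rewrite eq_sym.
      have E := comm q'x qx bq' cq' bq cq.
      by rewrite E eqxx in neq.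
    case: (eqVneq q' x0) => [Eq|q'x].
      rewrite Eq mult_sym in neq *; apply: mult_x0_le1 => //.
      apply/negP => /andP [bp' cp'].
      have E := comm p'x qx bp' cp' bq cq.
      by rewrite E setUC eqxx in neq.
    exact: mult_nox0.
  move=> H; left; split; first exact: loops.
  have nc q : ~~ (e b q && e c q) \/ q = x0.
    case: (eqVneq q x0) => [->|qx]; [by right|left].
    apply/negP => /andP [bq cq]; move/negP: H; apply; apply/existsP; exists q.
    by rewrite qx bq cq.
  move=> p q pV qV pq.
  case: (eqVneq p x0) => [Ep|px].
    rewrite Ep in pq *; apply: mult_x0_le1; first by rewrite eq_sym.
    by case: (nc q) => // E; rewrite E eqxx in pq.
  case: (eqVneq q x0) => [Eq|qx].
    rewrite Eq mult_sym; apply: mult_x0_le1 => //.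
    by case: (nc p) => // E; rewrite E eqxx in px.
  exact: mult_nox0.
move=> irr; have [_ [_ irr3]] := irr.
split; [|split].
- by move=> x y xV yV; rewrite /bc_underlying xV yV /= eq_sym mult_sym.
- by move=> x xV; rewrite /bc_underlying eqxx !andbF.
move=> x y xV yV dx dy; apply/negP => Jxy.
have gen z : z \in V -> deg_on V J z = 2 -> [/\ z != x0, ~~ (e b z && e c z) & deg e z = 2].
  move=> zV dz.
  have zx : z != x0 by apply: contra_eqN dz => /eqP ->; exact: noJx0.
  have ncz : ~~ (e b z && e c z).
    by apply/negP => /andP [bz cz]; move: dz; apply/eqP; exact: common_contra.
  by split => //; rewrite /deg /deg_on -/(N z) noncommon.
have [xx ncx dgx] := gen x xV dx.
have [yx ncy dgy] := gen y yV dy.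
have : y \in NJ x by rewrite inE yV Jxy.
rewrite NJ_img // => /imsetP [u]; rewrite inN => xu.
rewrite /bc_map; case: (e x0 u) => E.
  by rewrite E eqxx in yx.
have := irr3 x y (in_setT _) (in_setT _) dgx dgy.
by rewrite E xu.
Qed.

End Main.

End Basics.

Theorem corollary5p2 (T : finType) (e : rel T) (x0 : T) :
  simple_graph e -> cycle_extendable e -> deg e x0 = 2 ->
  (bc_simple e x0 \/ bc_exactly_two_multiple_edges e x0) /\
  (irreducible e -> irreducible_on (bc_vertices e x0) (bc_underlying e x0)).
Proof.
move=> [esym eirr] ce dx0.
have : #|[set y in [set: T] | e x0 y]| == 2 by rewrite -[#|_|]/(deg e x0) dx0.
case/cards2P => b [c [bc Hbc]].
have Nx0 v : e x0 v = (v == b) || (v == c).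
  have : (v \in [set y in [set: T] | e x0 y]) = (v \in [set b; c]) by rewrite Hbc.
  by rewrite !inE.
exact: (main_part esym eirr ce Nx0 bc).
Qed.
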